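(* Let $m\ge\ell\ge k\ge 1$ and let ${\mathcal{C}}={\mathcal{C}}[\ell+m,\ell,k]$ be the recursive code with all design parameters equal to $0$. Suppose that for every admissible triple $(n,\ell,k)$ a map ${\mathcal{D}}^{\mathcal{K}}_{n,\ell,k}$ from subspaces of the ambient space to ${\mathcal{K}}[n,\ell,k]\cup\{?\}$ is given which, on input $U$, returns $V\in{\mathcal{K}}[n,\ell,k]$ if $d(U,V)<\ell-k+1$ for some $V\in{\mathcal{K}}[n,\ell,k]$, and returns $?$ otherwise. Define the decoder ${\mathcal{D}}_{\ell+m,\ell,k}$ recursively: on input $U\subseteq W$, let $Z={\mathcal{D}}^{\mathcal{K}}_{\ell+m,\ell,k}(U)$; if $Z=?$ and $m\ge 2\ell$, let $U'=U|_{\mathbb{F}}$ and $V'={\mathcal{D}}_{m,\ell,k}(U')$, and if $V'\neq ?$ set $Z=\{0^\ell\}\times V'$; return $Z$. Let $V\in{\mathcal{C}}$ be transmitted and $U\subseteq W$ received, with $\dim U=\ell-\kappa+\gamma$ and $\dim(U\cap V)=\ell-\kappa$. If $\kappa+\gamma<\ell-k+1$, then ${\mathcal{D}}_{\ell+m,\ell,k}(U)=V$.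
   Context: Let $q$ be a prime power. Subspace distance: $d(U,V)=\dim U+\dim V-2\dim(U\cap V)$. For $W=\langle A\rangle\times\mathbb{F}$ and a subspace $U\subseteq W$, $U|_{\mathbb{F}}=\{v_2 : (v_1,v_2)\in U\}$. Kötter–Kschischang code ${\mathcal{K}}[n,\ell,k]$ (for $n-\ell \ge \ell \ge k \ge 1$): put $m=n-\ell$, $\mathbb{F}=\mathbb{F}_{q^m}$, fix $\mathbb{F}_q$-linearly independent $\alpha_1,\dots,\alpha_\ell \in \mathbb{F}$, let $\langle A\rangle$ be their $\mathbb{F}_q$-span and $W = \langle A\rangle \times \mathbb{F}$. For a linearized polynomial $f(x)=\sum_{i=0}^{k-1} f_i x^{q^i}$ with $f_i\in\mathbb{F}$, let ${\mathcal{E}}(f)=\mathrm{span}_{\mathbb{F}_q}\{(\alpha_i,f(\alpha_i)) : 1\le i\le \ell\}$, and ${\mathcal{K}}[n,\ell,k]=\{{\mathcal{E}}(f)\}$. Distinct elements of ${\mathcal{K}}$ intersect in dimension at most $k-1$. Any $n$-dimensional $\mathbb{F}_q$-space is identified with such a $W$ via a fixed linear isomorphism. Recursive code with all design parameters $0$: ${\mathcal{C}}[\ell+m,\ell,k]$ (for $m\ge\ell\ge k$) in $W=\langle A\rangle\times\mathbb{F}_{q^m}$ is defined by: if $m<2\ell$, ${\mathcal{C}}={\mathcal{K}}[\ell+m,\ell,k]$; otherwise, letting ${\mathcal{C}}[m,\ell,k]=\{U_1,\dots,U_N\}$ be the recursively constructed code inside $\mathbb{F}_{q^m}$ (viewed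 as an $m$-dimensional $\mathbb{F}_q$-space), ${\mathcal{C}}[\ell+m,\ell,k]={\mathcal{K}}[\ell+m,\ell,k]\cup\{\{0\}\times U_\sigma : 1\le\sigma\le N\}$. *)

(* Defs.v *)
From HB Require Import structures.
From mathcomp Require Import all_boot all_order all_algebra all_field.
Set Implicit Arguments. Unset Strict Implicit. Unset Printing Implicit Defensive.
Import GRing.Theory.
Local Open Scope ring_scope.

Definition subdist (K : fieldType) (vT : vectType K) (U V : {vspace vT}) : nat :=
  (\dim U + \dim V - 2 * \dim (U :&: V))%N.

Section Codes.
(* F = F_q ; E m = F_{q^m} (an extension of F of degree m) *)
Variable F : finFieldType.
Variable E : nat -> fieldExtType F.
Definition P m : vectType F := (E m * E m)%type.
Variables l k : nat.
Variable alpha : forall m, 'I_l -> E m.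
(* psi m : the fixed identification of the (l + (m-l))-dimensional space
   W_{m-l} = <A> x F_{q^{m-l}} with F_{q^m} (used when m >= 2l) *)
Variable psi : forall m, 'Hom(P (m - l)%N, E m).

Definition q := #|F|.

Definition inlF m : 'Hom(E m, P m) := linfun (fun x : E m => (x, 0)).
Definition inrF m : 'Hom(E m, P m) := linfun (fun x : E m => (0, x)).
Definition sndF m : 'Hom(P m, E m) := linfun (fun p : P m => p.2).

Definition spanA m : {vspace E m} := <<[seq alpha m i | i <- enum 'I_l]>>%VS.
Definition Wsp m : {vspace P m} :=
  (inlF m @: spanA m + inrF m @: fullv)%VS.

Definition linpoly m (c : 'I_k -> E m) (x : E m) : E m :=
  \sum_(i < k) c i * x ^+ (q ^ i)%N.

Definition Ef m (c : 'I_k -> E m) : {vspace P m} :=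
  <<[seq (alpha m i, linpoly c (alpha m i)) | i <- enum 'I_l]>>%VS.

Definition KKcode m (V : {vspace P m}) : Prop :=
  exists c : 'I_k -> E m, V = Ef c.

Definition lift0 m (V' : {vspace (P (m - l)%N)%type}) :
  {vspace P m} := (inrF m @: (psi m @: V'))%VS.

(* recursive code C[l+m, l, k] (all design parameters 0), with fuel *)
Fixpoint codeF (n : nat) (m : nat) : {vspace P m} -> Prop :=
  match n with
  | 0 => fun V => KKcode V
  | n'.+1 => fun V =>
      KKcode V \/
      ((2 * l <= m)%N /\ exists V', @codeF n' (m - l)%N V' /\ V = lift0 V')
  end.
Definition RCode m V := @codeF m m V.

(* pull back U|_F (a subspace of F_{q^m}) to a subspace of W_{m-l} *)
Definition pullback m (U : {vspace P m}) :
  {vspace (P (m - l)%N)%type} :=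
  ((psi m @^-1: (sndF m @: U)) :&: Wsp (m - l)%N)%VS.

(* the given KK decoders (None plays the role of '?') *)
Variable DK : forall m, {vspace P m} -> option {vspace P m}.

Fixpoint decF (n : nat) (m : nat) : {vspace P m} -> option {vspace P m} :=
  fun U =>
  match DK U with
  | Some Z => Some Z
  | None =>
    match n with
    | 0 => None
    | n'.+1 =>
      if (2 * l <= m)%N then
        match @decF n' (m - l)%N (pullback U) with
        | Some V' => Some (lift0 V')
        | None => None
        end
      else None
    end
  end.
Definition Dec m U := @decF m m U.

End Codes.

(* Main.v *)
Require Import Defs.
From HB Require Import structures.
From mathcomp Require Import all_boot all_order all_algebra all_field.
From Stdlib Require Import Lia.

Import GRing.Theory.

Lemma ar0 (a b : nat) : (a + b <= b)%N -> a = 0%N.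
Proof. rewrite -!(plusE). move=> /leP ?. lia. Qed.
Lemma ar1 (dU l k a b : nat) : (1 <= k)%N -> (k <= l)%N -> (a + b <= dU)%N -> (a <= l)%N -> (b <= l)%N ->
  (dU + l - 2 * a < l - k + 1)%N -> (dU + l - 2 * b < l - k + 1)%N -> False.
Proof. rewrite -!(plusE, minusE, multE). move=> /leP ? /leP ? /leP ? /leP ? /leP ? /leP ? /leP ?. lia. Qed.
Lemma ar2 (dU l k a a' b' : nat) : (b' <= dU)%N -> (a <= a')%N -> (a' <= b')%N -> (a' <= l)%N ->
  (dU + l - 2 * a < l - k + 1)%N -> (b' + l - 2 * a' < l - k + 1)%N.
Proof. rewrite -!(plusE, minusE, multE). move=> /leP ? /leP ? /leP ? /leP ? /leP ?. apply/leP. lia. Qed.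
Lemma ar3 (l k kappa gamma : nat) : (kappa + gamma < l - k + 1)%N ->
  ((l - kappa + gamma) + l - 2 * (l - kappa) < l - k + 1)%N.
Proof. rewrite -!(plusE, minusE, multE). move=> /leP ?. apply/leP. lia. Qed.

Local Open Scope ring_scope.

Section S.
Variable (F : finFieldType) (E : nat -> fieldExtType F).
Definition inr0 m (x : E m) : P E m := (0, x).
Definition inl0 m (x : E m) : P E m := (x, 0).
Definition fst0 m (x : P E m) : E m := x.1.
Definition snd0 m (x : P E m) : E m := x.2.
Fact inr0_lin m : linear (@inr0 m).
Proof. by move=> a x y; rewrite /inr0; congr (_,_) => //=; rewrite scaler0 addr0. Qed.
HB.instance Definition _ m := GRing.isLinear.Build F (E m) (P E m) _ (@inr0 m) (inr0_lin m).
Fact inl0_lin m : linear (@inl0 m).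
Proof. by move=> a x y; rewrite /inl0; congr (_,_) => //=; rewrite scaler0 addr0. Qed.
HB.instance Definition _ m := GRing.isLinear.Build F (E m) (P E m) _ (@inl0 m) (inl0_lin m).
Fact fst0_lin m : linear (@fst0 m).
Proof. by move=> a x y. Qed.
HB.instance Definition _ m := GRing.isLinear.Build F (P E m) (E m) _ (@fst0 m) (fst0_lin m).
Fact snd0_lin m : linear (@snd0 m).
Proof. by move=> a x y. Qed.
HB.instance Definition _ m := GRing.isLinear.Build F (P E m) (E m) _ (@snd0 m) (snd0_lin m).

Lemma inrFE m x : inrF E m x = (0,x).
Proof. by rewrite /inrF -[fun x => _]/(@inr0 m) lfunE. Qed.
Lemma inlFE m x : inlF E m x = (x,0).
Proof. by rewrite /inlF -[fun x => _]/(@inl0 m) lfunE. Qed.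
Lemma sndFE m x : sndF E m x = x.2.
Proof. by rewrite /sndF -[fun x => _]/(@snd0 m) lfunE. Qed.
Definition fstF m : 'Hom(P E m, E m) := linfun (@fst0 m).
Lemma fstFE m x : fstF m x = x.1.
Proof. by rewrite /fstF lfunE. Qed.

Lemma cap_ker0 (vT wT : vectType F) (f : 'Hom(vT, wT)) (U : {vspace vT}) :
  (forall v, v \in U -> f v = 0 -> v = 0) -> (U :&: lker f = 0)%VS.
Proof.
move=> H; apply/eqP; rewrite -subv0; apply/subvP => v /memv_capP [Hu Hk].
by rewrite memv0; apply/eqP; apply: H => //; apply/eqP; rewrite -memv_ker.
Qed.

Lemma dim_img_le (vT wT : vectType F) (f : 'Hom(vT, wT)) (U : {vspace vT}) :
  (\dim (f @: U) <= \dim U)%N.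
Proof. by rewrite -(limg_ker_dim f U) leq_addl. Qed.

Lemma inr_lker m (X : {vspace E m}) : (X :&: lker (inrF E m) = 0)%VS.
Proof. by apply: cap_ker0 => v _; rewrite inrFE => -[]. Qed.

Lemma inr_sub_kerfst m : (inrF E m @: fullv <= lker (fstF m))%VS.
Proof.
apply/subvP => v /memv_imgP [x _ ->]; by rewrite memv_ker fstFE inrFE.
Qed.

Variables (l k : nat) (alpha : forall m', 'I_l -> E m')
  (psi : forall m', 'Hom(P E (m' - l)%N, E m')).

Hypothesis Hfree : forall m', (l <= m')%N -> free [seq alpha m' i | i <- enum 'I_l].
Hypothesis Hpsi : forall m', (2 * l <= m')%N ->
     (lker (psi m') :&: Wsp alpha (m' - l)%N = 0)%VS /\
     (psi m' @: Wsp alpha (m' - l)%N = fullv)%VS.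

Lemma inr_sub_W m : (inrF E m @: fullv <= Wsp alpha m)%VS.
Proof. exact: addvSr. Qed.

Lemma Ef_sub m (c : 'I_k -> E m) : (Ef alpha c <= Wsp alpha m)%VS.
Proof.
apply/span_subvP => v /mapP [i Hi ->].
have -> : (alpha m i, linpoly c (alpha m i)) = inlF E m (alpha m i) + inrF E m (linpoly c (alpha m i)).
  by rewrite inlFE inrFE; congr (_,_); rewrite /= ?addr0 ?add0r.
apply: memv_add; apply: memv_img; last exact: memvf.
by apply: memv_span; apply: map_f.
Qed.

Lemma Ef_dim m (c : 'I_k -> E m) : (l <= m)%N ->
  \dim (Ef alpha c) = l /\ (Ef alpha c :&: lker (fstF m) = 0)%VS.
Proof.
move=> Hlm.
have Himg : (fstF m @: Ef alpha c = spanA alpha m)%VS.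
  rewrite /Ef limg_span -map_comp /spanA; congr (<< _ >>)%VS.
  by apply: eq_map => i /=; rewrite fstFE.
have Hsp : \dim (spanA alpha m) = l.
  by have := Hfree _ Hlm; rewrite /free size_map size_enum_ord => /eqP.
have Hle : (\dim (Ef alpha c) <= l)%N.
  by have := dim_span [seq (alpha m i, linpoly c (alpha m i)) | i <- enum 'I_l];
     rewrite size_map size_enum_ord.
have := limg_ker_dim (fstF m) (Ef alpha c); rewrite Himg Hsp => Hd.
have H0 : \dim (Ef alpha c :&: lker (fstF m)) = 0%N.
  by move: Hle; rewrite -Hd; apply: ar0.
split; first by rewrite -Hd H0.
by apply/eqP; rewrite -dimv_eq0 H0.
Qed.

Lemma code_props n : forall m' (V : {vspace P E m'}), (l <= m')%N ->
  codeF k alpha psi n V -> (V <= Wsp alpha m')%VS /\ \dim V = l.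
Proof.
elim: n => [|n IH] m' V Hl /=.
  by move=> [c ->]; split; [exact: Ef_sub | case: (Ef_dim _ c Hl)].
case=> [[c ->]|[H2 [V' [HV' ->]]]].
  by split; [exact: Ef_sub | case: (Ef_dim _ c Hl)].
have Hl' : (l <= m' - l)%N by rewrite leq_subRL ?addnn -?mul2n // (leq_trans Hl).
have [HsW Hd] := IH _ _ Hl' HV'.
split.
  apply: subv_trans (inr_sub_W m'); apply: limgS; exact: subvf.
rewrite /lift0 limg_dim_eq ?inr_lker // limg_dim_eq // .
apply/eqP; rewrite -subv0; apply: subv_trans (capvS HsW (subvv _)) _.
by rewrite capvC (proj1 (Hpsi _ H2)).
Qed.


Variable DK : forall m', {vspace P E m'} -> option {vspace P E m'}.
Hypothesis Hk1 : (1 <= k)%N.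
Hypothesis Hkl : (k <= l)%N.
Hypothesis HDK : forall m', (l <= m')%N -> forall U : {vspace P E m'},
     (U <= Wsp alpha m')%VS ->
     (forall V, KKcode k alpha V -> (subdist U V < l - k + 1)%N -> DK m' U = Some V) /\
     ((forall V, KKcode k alpha V -> ~ (subdist U V < l - k + 1)%N) -> DK m' U = None).

Lemma dec_ok n : forall m' (V U : {vspace P E m'}), (l <= m')%N ->
  codeF k alpha psi n V -> (U <= Wsp alpha m')%VS ->
  (subdist U V < l - k + 1)%N -> decF alpha psi DK n U = Some V.
Proof.
elim: n => [|n IH] m' V U Hl HV HU Hd.
  by rewrite /= ((proj1 (HDK _ Hl U HU)) V HV Hd).
have [HVW HVd] := code_props _ _ _ Hl HV.
case: HV => [HKK|[H2 [V' [HV' HVe]]]].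
  by rewrite /= ((proj1 (HDK _ Hl U HU)) V HKK Hd).
have Hl' : (l <= m' - l)%N by rewrite leq_subRL ?addnn -?mul2n // (leq_trans Hl).
have [HV'W HV'd] := code_props _ _ _ Hl' HV'.
have HVinr : (V <= lker (fstF m'))%VS.
  rewrite HVe /lift0; apply: subv_trans (inr_sub_kerfst m'); apply: limgS; exact: subvf.
have HNone : DK m' U = None.
  apply: (proj2 (HDK _ Hl U HU)) => V0 HV0 Hd0.
  have [c HVc] := HV0.
  have [HV0d HV0k] := Ef_dim _ c Hl.
  rewrite -HVc in HV0d HV0k.
  have HVV0 : (V :&: V0 = 0)%VS.
    apply/eqP; rewrite -subv0 -HV0k capvC; exact: capvS.
  have Hab : (\dim (U :&: V) + \dim (U :&: V0) <= \dim U)%N.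
    rewrite -dimv_sum_cap.
    have -> : \dim ((U :&: V) :&: (U :&: V0)) = 0%N.
      apply/eqP; rewrite dimv_eq0 -subv0 -HVV0; apply: capvS; exact: capvSr.
    rewrite addn0; apply: dimvS; by rewrite subv_add !capvSl.
  move: Hd Hd0; rewrite /subdist HVd HV0d => Hd Hd0.
  apply: (ar1 _ _ _ _ _ Hk1 Hkl Hab _ _ Hd Hd0).
    by rewrite -HVd; apply: dimvS; exact: capvSr.
  by rewrite -HV0d; apply: dimvS; exact: capvSr.
rewrite /= HNone H2.
set U' := pullback alpha psi U.
have HU'W : (U' <= Wsp alpha (m' - l)%N)%VS by exact: capvSr.
have Hpsi0 := proj1 (Hpsi _ H2).
have Hinj : forall X : {vspace P E (m' - l)%N}, (X <= Wsp alpha (m' - l)%N)%VS ->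
    (X :&: lker (psi m') = 0)%VS.
  move=> X HX; apply/eqP; rewrite -subv0 -Hpsi0 capvC; exact: capvS.
rewrite (IH _ V' U' Hl' HV' HU'W); first by rewrite HVe.
move: Hd; rewrite /subdist HVd HV'd; apply: ar2.
- rewrite -(limg_dim_eq (Hinj _ HU'W)).
  apply: leq_trans _ (dim_img_le _ _ (sndF E m') U).
  apply: dimvS; apply/subvP => y /memv_imgP [x Hx ->].
  by move: Hx; rewrite memv_cap -memv_preim => /andP [].
- set h := (inrF E m' \o psi m')%VF.
  apply: leq_trans _ (dim_img_le _ _ h (U' :&: V')%VS).
  apply: dimvS; apply/subvP => x /memv_capP [HxU HxV].
  move: HxV; rewrite HVe; unfold Defs.lift0; rewrite -limg_comp -/h => /memv_imgP [v Hv Hxe]; rewrite Hxe in HxU *.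
  apply: memv_img; rewrite memv_cap Hv andbT memv_cap -memv_preim.
  rewrite (subvP HV'W _ Hv) andbT.
  have -> : psi m' v = sndF E m' (h v) by rewrite sndFE /h comp_lfunE inrFE.
  by apply: memv_img.
- exact: dimvS (capvSl _ _).
- by apply: leq_trans (dimvS (capvSr U' V')) _; rewrite HV'd.
Qed.

End S.

Theorem mainTheorem4
  (F : finFieldType) (E : nat -> fieldExtType F)
  (l k m : nat)
  (alpha : forall m', 'I_l -> E m')
  (psi : forall m', 'Hom(P E (m' - l)%N, E m'))
  (DK : forall m', {vspace P E m'} -> option {vspace P E m'}) :
  (1 <= k)%N -> (k <= l)%N -> (l <= m)%N ->
  (* E m' is F_{q^m'}: an extension of F = F_q of degree m' *)
  (forall m', (0 < m')%N -> \dim {: E m'} = m') ->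
  (* alpha_1..alpha_l are F_q-linearly independent in F_{q^m'} *)
  (forall m', (l <= m')%N -> free [seq alpha m' i | i <- enum 'I_l]) ->
  (* psi m' is a linear isomorphism from W_{m'-l} = <A> x F_{q^(m'-l)} onto F_{q^m'} *)
  (forall m', (2 * l <= m')%N ->
     (lker (psi m') :&: Wsp alpha (m' - l)%N = 0)%VS /\
     (psi m' @: Wsp alpha (m' - l)%N = fullv)%VS) ->
  (* specification of the Koetter-Kschischang decoders *)
  (forall m', (l <= m')%N -> forall U : {vspace P E m'},
     (U <= Wsp alpha m')%VS ->
     (forall V, KKcode k alpha V -> (subdist U V < l - k + 1)%N -> DK m' U = Some V) /\
     ((forall V, KKcode k alpha V -> ~ (subdist U V < l - k + 1)%N) -> DK m' U = None)) ->
  forall (V U : {vspace P E m}) (kappa gamma : nat),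
    RCode k alpha psi V ->
    (U <= Wsp alpha m)%VS ->
    \dim U = (l - kappa + gamma)%N ->
    \dim (U :&: V)%VS = (l - kappa)%N ->
    (kappa + gamma < l - k + 1)%N ->
    Dec alpha psi DK U = Some V.

Proof.
move=> Hk1 Hkl Hlm _ Hfree Hpsi HDK V U kappa gamma HV HU HdU HdUV Hkg.
apply: (dec_ok F E l k alpha psi Hfree Hpsi DK Hk1 Hkl HDK m m V U Hlm HV HU).
have [_ HVd] := code_props F E l k alpha psi Hfree Hpsi m m V Hlm HV.
by rewrite /subdist HdU HdUV HVd; apply: ar3.
Qed.
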